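(* Assume (A1)–(A2) below. There is a constant $\hat C_1>0$ depending only on the bounds in (A1)–(A2) such that for every $\varepsilon\in[0,\bar\varepsilon]$, $\gamma\in[\underline\gamma,\bar\gamma]$ and all $(\rho,w),(\hat\rho,\hat w)\in L^2(0,\ell)^2$ with $\underline\rho\le\rho,\hat\rho\le\bar\rho$, $-\bar w\le w,\hat w\le\bar w$ a.e., $$-\int_0^\ell\gamma\,(|w|w-|\hat w|\hat w)\,a\,(\rho w-\hat\rho\hat w)\,dx\le\hat C_1\mathcal{H}_\varepsilon(\boldsymbol u|\hat{\boldsymbol u})-2\mathcal{D}(\boldsymbol u|\hat{\boldsymbol u}),$$ where $\boldsymbol u=(\rho,w)$, $\hat{\boldsymbol u}=(\hat\rho,\hat w)$ and $\mathcal{D}(\boldsymbol u|\hat{\boldsymbol u})=\frac1{16}\int_0^\ell\gamma a\hat\rho(|w|+|\hat w|)(w-\hat w)^2\,dx$.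
   Context: Fix $\ell>0$, $a:[0,\ell]\to\mathbb{R}$, a constant $g$, $z:[0,\ell]\to\mathbb{R}$, smooth strictly convex $P:(0,\infty)\to\mathbb{R}$. (A1): positive constants $\underline\rho\le\bar\rho$, $\bar w$, $\bar\varepsilon$ with $\rho P''(\rho)\ge4\bar\varepsilon^2\bar w^2$ for $\underline\rho\le\rho\le\bar\rho$; $0<\underline a\le a\le\bar a$; $|gz|\le\bar g\bar z$. (A2): $0\le\varepsilon\le\bar\varepsilon$, $0<\underline\gamma\le\gamma\le\bar\gamma$, states satisfy $\underline\rho\le\rho\le\bar\rho$, $-\bar w\le w\le\bar w$. Relative energy: $\mathcal{H}_\varepsilon(\boldsymbol u|\hat{\boldsymbol u})=\mathcal{H}_\varepsilon(\boldsymbol u)-\mathcal{H}_\varepsilon(\hat{\boldsymbol u})-\int_0^\ell a[(\varepsilon^2\hat w^2/2+P'(\hat\rho)+gz)(\rho-\hat\rho)+\varepsilon^2\hat\rho\hat w(w-\hat w)]dx$ with $\mathcal{H}_\varepsilon(\rho,w)=\int_0^\ell a(\varepsilon^2\rho w^2/2+P(\rho)+gz\rho)dx$. *)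

(* Defs.v *)
From HB Require Import structures.
From mathcomp Require Import all_boot all_order all_algebra.
From mathcomp Require Import all_classical all_reals all_analysis.
Set Implicit Arguments. Unset Strict Implicit. Unset Printing Implicit Defensive.
Import Order.TTheory GRing.Theory Num.Theory.
Import numFieldNormedType.Exports.
Local Open Scope classical_set_scope.
Local Open Scope ring_scope.

Section Defs.
Variable R : realType.

Definition int0l (l : R) (f : R -> R) : R :=
  Rintegral (@lebesgue_measure R) `[0, l] f.

Definition smooth_pos (P : R -> R) : Prop :=
  forall (n : nat) (x : R), 0 < x -> derivable (iter n (@derive1 R R) P) x 1.

Definition strictly_convex_pos (P : R -> R) : Prop :=
  forall x y t : R, 0 < x -> 0 < y -> x != y -> 0 < t < 1 ->
    P (t * x + (1 - t) * y) < t * P x + (1 - t) * P y.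

Definition Henergy (l : R) (a : R -> R) (g : R) (z : R -> R) (P : R -> R)
  (eps : R) (rho w : R -> R) : R :=
  int0l l (fun x => a x * (eps ^+ 2 * rho x * w x ^+ 2 / 2 + P (rho x)
                           + g * z x * rho x)).

Definition Hrel (l : R) (a : R -> R) (g : R) (z : R -> R) (P : R -> R)
  (eps : R) (rho w rhoh wh : R -> R) : R :=
  Henergy l a g z P eps rho w - Henergy l a g z P eps rhoh wh
  - int0l l (fun x => a x *
      ((eps ^+ 2 * wh x ^+ 2 / 2 + derive1 P (rhoh x) + g * z x)
         * (rho x - rhoh x)
       + eps ^+ 2 * rhoh x * wh x * (w x - wh x))).

Definition Drel (l : R) (a : R -> R) (gamma : R) (rho w rhoh wh : R -> R) : R :=
  16^-1 * int0l l (fun x => gamma * a x * rhoh x * (`|w x| + `|wh x|)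
                            * (w x - wh x) ^+ 2).

End Defs.

(* Main.v *)
Require Import Defs.
From HB Require Import structures.
From mathcomp Require Import all_boot all_order all_algebra.
From mathcomp Require Import all_classical all_reals all_analysis.
From mathcomp Require Import measurable_realfun.
From mathcomp Require Import ring lra.
Import Order.TTheory GRing.Theory Num.Theory.
Import numFieldNormedType.Exports.
Local Open Scope classical_set_scope.
Local Open Scope ring_scope.

Section S.
Variable R : realType.
Implicit Types f g : R -> R.

Lemma dD f g (x df dg d : R) : is_derive x 1 f df -> is_derive x 1 g dg -> df + dg = d ->
  is_derive x 1 (fun s => f s + g s) d.
Proof. move=> ? ? <-; exact: is_deriveD. Qed.
Lemma dB f g (x df dg d : R) : is_derive x 1 f df -> is_derive x 1 g dg -> df - dg = d ->
  is_derive x 1 (fun s => f s - g s) d.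
Proof. move=> ? ? <-; exact: is_deriveB. Qed.
Lemma dM f g (x df dg d : R) : is_derive x 1 f df -> is_derive x 1 g dg -> f x * dg + g x * df = d ->
  is_derive x 1 (fun s => f s * g s) d.
Proof. move=> ? ? <-; exact: is_deriveM. Qed.
Lemma dC (c x : R) : is_derive x 1 (fun _ => c) 0.
Proof. exact: is_derive_cst. Qed.
Lemma dI (x : R) : is_derive x 1 (fun s : R => s) 1.
Proof. exact: is_derive_id. Qed.

Lemma mono_up f df (x y : R) : x <= y ->
  (forall s, x <= s <= y -> is_derive s 1 f (df s)) ->
  (forall s, x <= s <= y -> 0 <= df s) -> f x <= f y.
Proof.
move=> xy hd hp; case: (ltgtP x y) xy => // [xy _|-> _]; last by [].
have hd' : forall s, s \in `]x, y[%R -> is_derive s 1 f (df s).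
  by move=> s; rewrite in_itv /= => /andP[? ?]; apply: hd; rewrite !ltW.
have hc : {within `[x, y], continuous f}.
  apply: derivable_within_continuous => s; rewrite in_itv /= => hs.
  by have := hd s hs; case.
have [c cin e] := MVT xy hd' hc; rewrite -subr_ge0 e.
move: cin; rewrite in_itv /= => /andP[? ?].
by rewrite mulr_ge0 // ?hp ?subr_ge0 ?ltW // !ltW.
Qed.

Ltac dsolve h := repeat first [apply: dD | apply: dB | apply: dM | apply: dI | apply: dC | apply: h].

Lemma taylor2 G G1 G2 (x y m : R) : x <= y ->
  (forall s, x <= s <= y -> is_derive s 1 G (G1 s)) ->
  (forall s, x <= s <= y -> is_derive s 1 G1 (G2 s)) ->
  (forall s, x <= s <= y -> 2 * m <= G2 s) ->
  m * (y - x) ^+ 2 <= G y - G x - G1 x * (y - x) /\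
  m * (y - x) ^+ 2 <= G x - G y - G1 y * (x - y).
Proof.
move=> xy hG hG1 hG2.
have chi : forall s, x <= s <= y -> 0 <= G1 s - G1 x - 2 * m * (s - x).
  move=> s /andP[xs sy].
  have D : forall t, x <= t <= s -> is_derive t 1 (fun t => G1 t - G1 x - 2 * m * (t - x)) (G2 t - 2 * m).
    move=> t /andP[xt ts].
    have ht : x <= t <= y by rewrite xt (le_trans ts sy).
    have h := hG1 t ht.
    dsolve h; try reflexivity. rewrite /=. rewrite /GRing.scale /=. ring.
  have Pp : forall t, x <= t <= s -> 0 <= G2 t - 2 * m.
    move=> t /andP[xt ts]; rewrite subr_ge0; apply: hG2; by rewrite xt (le_trans ts sy).
  have := @mono_up _ _ x s xs D Pp; rewrite /=. 
  have -> : G1 x - G1 x - 2 * m * (x - x) = 0 by ring.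
  done.
have chi2 : forall s, x <= s <= y -> G1 s - G1 y - 2 * m * (s - y) <= 0.
  move=> s /andP[xs sy].
  have D : forall t, s <= t <= y -> is_derive t 1 (fun t => G1 t - G1 y - 2 * m * (t - y)) (G2 t - 2 * m).
    move=> t /andP[st ty].
    have ht : x <= t <= y by rewrite ty (le_trans xs st).
    have h := hG1 t ht.
    dsolve h; try reflexivity. rewrite /GRing.scale /=. ring.
  have Pp : forall t, s <= t <= y -> 0 <= G2 t - 2 * m.
    move=> t /andP[st ty]; rewrite subr_ge0; apply: hG2; by rewrite ty (le_trans xs st).
  have := @mono_up _ _ s y sy D Pp; rewrite /=. 
  have -> : G1 y - G1 y - 2 * m * (y - y) = 0 by ring.
  done.
split.
  have D : forall t, x <= t <= y -> is_derive t 1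
     (fun t => G t - G x - G1 x * (t - x) - m * ((t - x) * (t - x)))
     (G1 t - G1 x - 2 * m * (t - x)).
    move=> t ht; have h := hG t ht.
    dsolve h; try reflexivity. rewrite /GRing.scale /=. ring.
  have := @mono_up _ _ x y xy D chi; rewrite /= => H.
  have e1 : G x - G x - G1 x * (x - x) - m * ((x - x) * (x - x)) = 0 by ring.
  rewrite e1 in H; rewrite expr2; lra.
have D : forall t, x <= t <= y -> is_derive t 1
     (fun t => G y + G1 y * (t - y) + m * ((t - y) * (t - y)) - G t)
     (- (G1 t - G1 y - 2 * m * (t - y))).
  move=> t ht; have h := hG t ht.
  dsolve h; try reflexivity. rewrite /GRing.scale /=. ring.
have Pp : forall t, x <= t <= y -> 0 <= - (G1 t - G1 y - 2 * m * (t - y)).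
  by move=> t ht; rewrite oppr_ge0; apply: chi2.
have := @mono_up _ _ x y xy D Pp; rewrite /= => H.
have e1 : G y + G1 y * (y - y) + m * ((y - y) * (y - y)) - G y = 0 by ring.
rewrite e1 in H; rewrite expr2.
have e2 : (y - x) * (y - x) = (x - y) * (x - y) by ring.
rewrite e2; lra.
Qed.

Lemma isdP (P : R -> R) s : derivable P s 1 -> is_derive s 1 P (derive1 P s).
Proof. by move=> h; rewrite derive1E; exact: derivableP. Qed.

Lemma conv_bound (wb a b t : R) : 0 <= t <= 1 -> - wb <= a <= wb -> - wb <= b <= wb ->
  - wb <= a + t * (b - a) <= wb.
Proof. move=> /andP[? ?] /andP[? ?] /andP[? ?]; apply/andP; split; nra. Qed.

Lemma pw (P : R -> R) (lo hi wb eb eps r rh w wh : R) :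
  0 < lo -> 0 < wb -> 0 < eb ->
  (forall s, 0 < s -> derivable P s 1) ->
  (forall s, 0 < s -> derivable (derive1 P) s 1) ->
  (forall s, lo <= s <= hi -> 4 * eb ^+ 2 * wb ^+ 2 <= s * derive1 (derive1 P) s) ->
  0 <= eps <= eb -> lo <= r <= hi -> lo <= rh <= hi -> - wb <= w <= wb -> - wb <= wh <= wb ->
  (eb ^+ 2 * wb ^+ 2 / hi) * (r - rh) ^+ 2 <=
  P r - P rh - derive1 P rh * (r - rh) + eps ^+ 2 / 2 * r * (w - wh) ^+ 2
  + eps ^+ 2 * wh * (r - rh) * (w - wh).
Proof.
move=> lo0 wb0 eb0 hP hP1 hA /andP[e0 e1] /andP[r1 r2] /andP[rh1 rh2] /andP[w1 w2] /andP[wh1 wh2].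
have hi0 : 0 < hi by lra.
case: (eqVneq r rh) => [->|dn0].
  have -> : P rh - P rh - derive1 P rh * (rh - rh) + eps ^+ 2 / 2 * rh * (w - wh) ^+ 2
     + eps ^+ 2 * wh * (rh - rh) * (w - wh) = eps ^+ 2 / 2 * rh * (w - wh) ^+ 2 by ring.
  rewrite subrr (_ : (0:R) ^+ 2 = 0) ?mulr0; last by rewrite expr2 mulr0.
  by apply: mulr_ge0; [apply: mulr_ge0; [apply: mulr_ge0; [apply: sqr_ge0|lra]|lra]|apply: sqr_ge0].
have dn : r - rh != 0 by rewrite subr_eq0.
set c := eb ^+ 2 * wb ^+ 2.
have c0 : 0 < c by rewrite /c; apply: mulr_gt0; apply: exprn_gt0.
set q := (w - wh) / (r - rh).
pose v s := wh + (s - rh) * q.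
pose F s := P s + eps ^+ 2 * s * (v s * v s) / 2.
pose F1 s := derive1 P s + eps ^+ 2 * (v s * v s / 2 + s * v s * q).
pose F2 s := derive1 (derive1 P) s + eps ^+ 2 * (2 * v s * q + s * q * q).
have key : forall x y, x <= y -> lo <= x -> y <= hi ->
    (forall s, x <= s <= y -> - wb <= v s <= wb) ->
    c / hi * (y - x) ^+ 2 <= F y - F x - F1 x * (y - x) /\
    c / hi * (y - x) ^+ 2 <= F x - F y - F1 y * (x - y).
  move=> x y xy lox yhi hv; apply: (@taylor2 F F1 F2 x y (c / hi) xy) => s /andP[xs sy]; have s0 : 0 < s by lra.
  - have h := isdP _ _ (hP s s0).
    rewrite /F /v; dsolve h; try reflexivity.
    rewrite /F1 /v /GRing.scale /=. by field.
  - have h := isdP _ _ (hP1 s s0).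
    rewrite /F1 /v; dsolve h; try reflexivity.
    rewrite /F2 /v /GRing.scale /=. by field.
  - have hs : lo <= s <= hi by apply/andP; split; lra.
    have hs' : x <= s <= y by apply/andP; split; lra.
    have := hA s hs; have := hv s hs'.
    rewrite /F2 -/c. set vs := v s. set P2 := derive1 (derive1 P) s.
    move=> /andP[v1 v2] hA'.
    have ve : vs ^+ 2 <= wb ^+ 2.
      rewrite -subr_ge0 (_ : wb ^+ 2 - vs ^+ 2 = (wb - vs) * (wb + vs)); last by ring.
      by apply: mulr_ge0; lra.
    have ee : eps ^+ 2 <= eb ^+ 2 by rewrite ler_sqr ?nnegrE; lra.
    set X := P2 + _.
    have sF2 : 3 * c <= s * X.
      have E : s * X = s * P2 + eps ^+ 2 * (s * q + vs) ^+ 2 - eps ^+ 2 * vs ^+ 2 by rewrite /X; ring.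
      rewrite E.
      have : 0 <= eps ^+ 2 * (s * q + vs) ^+ 2 by apply: mulr_ge0; apply: sqr_ge0.
      have : eps ^+ 2 * vs ^+ 2 <= c by rewrite /c; apply: ler_pM; rewrite ?sqr_ge0.
      rewrite -mulrA -/c in hA'. lra.
    have X0 : 0 < X.
      have : 0 < s * X by apply: lt_le_trans sF2; lra.
      by rewrite pmulr_rgt0.
    have hX : s * X <= hi * X by rewrite ler_pM2r //; lra.
    rewrite mulrA ler_pdivrMr // mulrC; lra.
have E : F r - F rh - F1 rh * (r - rh) =
  P r - P rh - derive1 P rh * (r - rh) + eps ^+ 2 / 2 * r * (w - wh) ^+ 2
  + eps ^+ 2 * wh * (r - rh) * (w - wh).
  by rewrite /F /F1 /v /q; field.
rewrite -E -/c.
have vt : forall s, v s = wh + ((s - rh) / (r - rh)) * (w - wh).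
  by move=> s; rewrite /v /q; field.
case: (ltgtP r rh) dn0 => // [rlt|rgt] _.
- have hv : forall s, r <= s <= rh -> - wb <= v s <= wb.
    move=> s /andP[s1 s2]; rewrite vt; apply: conv_bound; last by apply/andP.
    + have -> : (s - rh) / (r - rh) = (rh - s) / (rh - r). rewrite -[rh - s]opprB -[rh - r]opprB. by rewrite invrN mulrN mulNr opprK.
      have rr : 0 < rh - r by lra.
      apply/andP; split; first by apply: divr_ge0; lra.
      by rewrite ler_pdivrMr // mul1r; lra.
    + by apply/andP.
  have [_ H] := key r rh (ltW rlt) r1 rh2 hv.
  by rewrite (_ : (r - rh) ^+ 2 = (rh - r) ^+ 2) //; ring.
- have hv : forall s, rh <= s <= r -> - wb <= v s <= wb.
    move=> s /andP[s1 s2]; rewrite vt; apply: conv_bound; last by apply/andP.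
    + have rr : 0 < r - rh by lra.
      apply/andP; split; first by apply: divr_ge0; lra.
      by rewrite ler_pdivrMr // mul1r; lra.
    + by apply/andP.
  by have [H _] := key rh r (ltW rgt) rh1 r2 hv.
Qed.

End S.

Section FR.
Variable R : realFieldType.

Lemma amgm (x al be : R) : 0 <= al -> 0 <= be -> x ^+ 2 <= 4 * al * be -> - x <= al + be.
Proof.
move=> a0 b0 h; case: (lerP (- x) (al + be)) => // hx.
have h2 : (al + be) * (al + be) < (- x) * (- x).
  by apply: ltr_pM => //; apply: addr_ge0.
have h3 := sqr_ge0 (al - be).
have e : (- x) * (- x) = x ^+ 2 by ring.
rewrite e in h2; exfalso.
have : (al - be) ^+ 2 = (al + be) * (al + be) - 4 * al * be by ring.
lra.
Qed.

Lemma absF (w wh : R) :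
  (`|w| + `|wh|) * (w - wh) ^+ 2 / 2 <= (`|w| * w - `|wh| * wh) * (w - wh) /\
  (`|w| * w - `|wh| * wh) ^+ 2 <= (`|w| + `|wh|) ^+ 2 * (w - wh) ^+ 2.
Proof.
have sq := sqr_ge0 (w - wh). have sq2 := sqr_ge0 (w + wh).
have sq3 : 0 <= (w - wh) ^+ 2 + w ^+ 2 + wh ^+ 2 by rewrite !addr_ge0 ?sqr_ge0.
case: (lerP 0 w) => hw; case: (lerP 0 wh) => hwh;
  rewrite ?(ger0_norm hw) ?(ger0_norm hwh) ?(ltr0_norm hw) ?(ltr0_norm hwh).
- have h1 : 0 <= (w + wh) * (w - wh) ^+ 2 by apply: mulr_ge0 => //; lra.
  split; nra.
- have h1 : 0 <= (w - wh) * (w + wh) ^+ 2 by apply: mulr_ge0 => //; lra.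
  have h2 : 0 <= (- (w * wh)) * ((w - wh) ^+ 2 + w ^+ 2 + wh ^+ 2).
    apply: mulr_ge0 => //; rewrite oppr_ge0; nra.
  split; nra.
- have h1 : 0 <= (wh - w) * (w + wh) ^+ 2 by apply: mulr_ge0 => //; lra.
  have h2 : 0 <= (- (w * wh)) * ((w - wh) ^+ 2 + w ^+ 2 + wh ^+ 2).
    apply: mulr_ge0 => //; rewrite oppr_ge0; nra.
  split; nra.
- have h1 : 0 <= - (w + wh) * (w - wh) ^+ 2 by apply: mulr_ge0 => //; lra.
  split; nra.
Qed.

Lemma fric (w wh r rh a gam gh lo wb : R) :
  0 < lo -> lo <= rh -> 0 <= a -> 0 <= gam <= gh -> - wb <= w <= wb -> - wb <= wh <= wb ->
  - (gam * (`|w| * w - `|wh| * wh) * a * (r * w - rh * wh)) <=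
  (gh * 2 * wb ^+ 3 / lo) * a * (r - rh) ^+ 2
  - 8^-1 * (gam * a * rh * (`|w| + `|wh|) * (w - wh) ^+ 2).
Proof.
move=> lo0 lorh a0 /andP[g0 ggh] /andP[w1 w2] /andP[wh1 wh2].
have rh0 : 0 < rh by lra.
have [F1 F2] := absF w wh.
set S := `|w| + `|wh| in F1 F2 *. set A := `|w| * w - `|wh| * wh in F1 F2 *.
set dw := w - wh in F1 F2 *. set dr := r - rh.
have S0 : 0 <= S by rewrite /S; apply: addr_ge0.
have S2 : S <= 2 * wb.
  have : `|w| <= wb by rewrite ler_norml; lra.
  have : `|wh| <= wb by rewrite ler_norml; lra.
  rewrite /S; lra.
have wb0 : 0 <= wb by lra.
have T2 : - (w * A * dr) <= 3 / 8 * rh * S * dw ^+ 2 + 2 / 3 * wb ^+ 2 * S * dr ^+ 2 / rh.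
  apply: amgm.
  - apply: mulr_ge0; [|exact: sqr_ge0]. apply: mulr_ge0 => //. apply: mulr_ge0; lra.
  - apply: mulr_ge0; [|by rewrite invr_ge0; lra]. apply: mulr_ge0; [|exact: sqr_ge0].
    apply: mulr_ge0 => //. apply: mulr_ge0; [lra|exact: sqr_ge0].
  have -> : 4 * (3 / 8 * rh * S * dw ^+ 2) * (2 / 3 * wb ^+ 2 * S * dr ^+ 2 / rh)
     = wb ^+ 2 * S ^+ 2 * dw ^+ 2 * dr ^+ 2 by field; lra.
  have hw2 : w ^+ 2 <= wb ^+ 2.
    rewrite -subr_ge0 (_ : wb ^+ 2 - w ^+ 2 = (wb - w) * (wb + w)); last by ring.
    by apply: mulr_ge0; lra.
  rewrite (_ : (w * A * dr) ^+ 2 = w ^+ 2 * (A ^+ 2 * dr ^+ 2)); last by ring.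
  rewrite (_ : wb ^+ 2 * S ^+ 2 * dw ^+ 2 * dr ^+ 2 = wb ^+ 2 * ((S ^+ 2 * dw ^+ 2) * dr ^+ 2)); last by ring.
  apply: ler_pM; rewrite ?sqr_ge0 //.
    by apply: mulr_ge0; apply: sqr_ge0.
  by apply: ler_wpM2r; rewrite ?sqr_ge0.
have T3 : 2 / 3 * wb ^+ 2 * S * dr ^+ 2 / rh <= 2 * wb ^+ 3 / lo * dr ^+ 2.
  have i1 : rh^-1 <= lo^-1 by rewrite lef_pV2 ?posrE.
  have i0 : 0 < rh^-1 by rewrite invr_gt0.
  have e1 : 2 / 3 * wb ^+ 2 * S * dr ^+ 2 / rh = (2 / 3 * wb ^+ 2 * S) * (dr ^+ 2 * rh^-1) by ring.
  have e2 : 2 * wb ^+ 3 / lo * dr ^+ 2 = (2 * wb ^+ 3) * (dr ^+ 2 * lo^-1) by ring.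
  rewrite e1 e2; apply: ler_pM.
  - apply: mulr_ge0; [apply: mulr_ge0; [lra|exact: sqr_ge0]|lra].
  - apply: mulr_ge0; [exact: sqr_ge0|lra].
  - rewrite (_ : wb ^+ 3 = wb ^+ 2 * wb); last by ring.
    have := sqr_ge0 wb; nra.
  - by apply: ler_wpM2l; rewrite ?sqr_ge0.
have T1 : - (rh * A * dw) <= - (rh * (S * dw ^+ 2 / 2)).
  by rewrite lerN2 -(mulrA rh A dw); apply: ler_wpM2l; lra.
have Q : - (A * (r * w - rh * wh)) <= - (8^-1 * (rh * S * dw ^+ 2)) + 2 * wb ^+ 3 / lo * dr ^+ 2.
  have -> : - (A * (r * w - rh * wh)) = - (rh * A * dw) - w * A * dr by rewrite /dw /dr; ring.
  lra.
have -> : - (gam * A * a * (r * w - rh * wh)) = gam * a * (- (A * (r * w - rh * wh))) by ring.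
have Q2 : gam * a * (- (A * (r * w - rh * wh))) <= gam * a * (- (8^-1 * (rh * S * dw ^+ 2)) + 2 * wb ^+ 3 / lo * dr ^+ 2).
  by apply: ler_wpM2l => //; apply: mulr_ge0.
have h3 : 0 <= 2 * wb ^+ 3 / lo * dr ^+ 2.
  apply: mulr_ge0; [|exact: sqr_ge0]. apply: mulr_ge0; [|by rewrite invr_ge0; lra].
  by apply: mulr_ge0; [lra|apply: exprn_ge0].
have h4 : gam * a * (2 * wb ^+ 3 / lo * dr ^+ 2) <= gh * a * (2 * wb ^+ 3 / lo * dr ^+ 2).
  by apply: ler_wpM2r => //; apply: ler_wpM2r.
have -> : gh * 2 * wb ^+ 3 / lo * a * dr ^+ 2 = gh * a * (2 * wb ^+ 3 / lo * dr ^+ 2) by ring.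
have e5 : gam * a * (- (8^-1 * (rh * S * dw ^+ 2)) + 2 * wb ^+ 3 / lo * dr ^+ 2) = - (8^-1 * (gam * a * rh * S * dw ^+ 2)) + gam * a * (2 * wb ^+ 3 / lo * dr ^+ 2) by ring.
rewrite e5 in Q2.
lra.
Qed.
End FR.

Section G.
Variable R : realType.
Variable l : R.
Implicit Types f g : R -> R.

Definition good f := measurable_fun (`[0, l] : set R) f /\
  exists M, forall x, x \in `[0, l] -> `|f x| <= M.

Lemma good_int f : good f -> (@lebesgue_measure R).-integrable `[0, l] (EFin \o f).
Proof.
move=> [mf [M hM]]; apply: measurable_bounded_integrable => //.
- by rewrite /= lebesgue_measure_itv //=; case: ifPn => // _; rewrite -EFinB ltry.
- exists M; split; first by rewrite num_real.
  move=> M' hM' x Dx; apply: le_trans (hM x Dx) (ltW hM').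
Qed.

Lemma goodC (c : R) : good (fun _ => c).
Proof. by split; [exact: measurable_cst | exists `|c|]. Qed.

Lemma goodD f g : good f -> good g -> good (fun x => f x + g x).
Proof.
move=> [mf [M hM]] [mg [N hN]]; split; first exact: measurable_funD.
exists (M + N) => x hx; apply: le_trans (ler_normD _ _) _; apply: lerD; auto.
Qed.

Lemma goodB f g : good f -> good g -> good (fun x => f x - g x).
Proof.
move=> [mf [M hM]] [mg [N hN]]; split; first exact: measurable_funB.
exists (M + N) => x hx; apply: le_trans (ler_normB _ _) _; apply: lerD; auto.
Qed.

Lemma goodM f g : good f -> good g -> good (fun x => f x * g x).
Proof.
move=> [mf [M hM]] [mg [N hN]]; split; first exact: measurable_funM.
exists (M * N) => x hx; rewrite normrM; apply: ler_pM => //; auto.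
Qed.

Lemma goodN f : good f -> good (fun x => - f x).
Proof.
move=> [mf [M hM]]; split; first exact: measurable_funN.
by exists M => x hx; rewrite normrN; auto.
Qed.

Lemma goodV f : good f -> good (fun x => f x / 2).
Proof. move=> h; apply: goodM => //; exact: goodC. Qed.

Lemma goodA f : good f -> good (fun x => `|f x|).
Proof.
move=> [mf [M hM]]; split; first by apply: measurableT_comp => //; exact: normr_measurable.
by exists M => x hx; rewrite normr_id; auto.
Qed.

Lemma goodX f : good f -> good (fun x => f x ^+ 2).
Proof.
move=> h; have e : (fun x => f x ^+ 2) = (fun x => f x * f x) by apply: funext => x; rewrite expr2.
by rewrite e; apply: goodM.
Qed.

Lemma good_hyp f (lo hi : R) : measurable_fun (`[0, l] : set R) f ->
  (forall x, x \in `[0, l] -> lo <= f x <= hi) -> good f.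
Proof.
move=> mf hb; split => //; exists (`|lo| + `|hi|) => x /hb /andP[h1 h2].
rewrite ler_norml; apply/andP; split.
  have := ler_norm lo; have := normr_ge0 hi; have : - `|lo| <= lo by apply: lerNnormlW. lra.
have := ler_norm hi; have := normr_ge0 lo; lra.
Qed.

Lemma good_comp (P : R -> R) f (lo hi : R) : lo <= hi -> measurable_fun (`[0, l] : set R) f ->
  (forall x, x \in `[0, l] -> lo <= f x <= hi) ->
  (forall s, lo <= s <= hi -> derivable P s 1) -> good (fun x => P (f x)).
Proof.
move=> lh mf hb hP.
have cP : {within `[lo, hi], continuous P}.
  by apply: derivable_within_continuous => s; rewrite in_itv /= => /hP.
split.
  apply: (@measurable_comp _ _ _ _ _ _ (`[lo, hi] : set R)) => //.
  - by move=> _ [x hx <-]; rewrite /= in_itv /=; apply: hb.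
  - by apply: subspace_continuous_measurable_fun.
have [c1 _ h1] := EVT_max lh cP.
have [c2 _ h2] := EVT_min lh cP.
exists (`|P c1| + `|P c2|) => x /hb hx.
have hx' : f x \in `[lo, hi] by rewrite in_itv.
have := h1 _ hx'; have := h2 _ hx'.
have := ler_norm (P c1); have : - `|P c2| <= P c2 by apply: lerNnormlW.
have := normr_ge0 (P c1); have := normr_ge0 (P c2).
move=> ? ? ? ? ? ?; rewrite ler_norml; apply/andP; split; lra.
Qed.
End G.
Arguments good {R} l f.
Arguments good_int {R l f}.
Arguments goodC {R l}.
Arguments goodD {R l f g}.
Arguments goodB {R l f g}.
Arguments goodM {R l f g}.
Arguments goodN {R l f}.
Arguments goodA {R l f}.
Arguments goodX {R l f}.
Arguments good_hyp {R l f lo hi}.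
Arguments good_comp {R l P f lo hi}.

Theorem lemma4p2 (R : realType)
  (rho_lo rho_hi w_hi eps_hi a_lo a_hi g_hi z_hi gam_lo gam_hi : R) :
  0 < rho_lo -> rho_lo <= rho_hi -> 0 < w_hi -> 0 < eps_hi ->
  0 < a_lo -> a_lo <= a_hi -> 0 < g_hi -> 0 < z_hi ->
  0 < gam_lo -> gam_lo <= gam_hi ->
  exists C1 : R, 0 < C1 /\
  forall (l : R) (a : R -> R) (g : R) (z : R -> R) (P : R -> R),
    0 < l ->
    smooth_pos P -> strictly_convex_pos P ->
    (* (A1) *)
    (forall r, rho_lo <= r <= rho_hi ->
       4 * eps_hi ^+ 2 * w_hi ^+ 2 <= r * derive1 (derive1 P) r) ->
    measurable_fun `[0, l] a ->
    (forall x, x \in `[0, l] -> a_lo <= a x <= a_hi) ->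
    measurable_fun `[0, l] z ->
    (forall x, x \in `[0, l] -> `|g * z x| <= g_hi * z_hi) ->
    forall (eps gam : R) (rho w rhoh wh : R -> R),
    (* (A2) *)
    0 <= eps <= eps_hi -> gam_lo <= gam <= gam_hi ->
    measurable_fun `[0, l] rho -> measurable_fun `[0, l] w ->
    measurable_fun `[0, l] rhoh -> measurable_fun `[0, l] wh ->
    (forall x, x \in `[0, l] ->
       [/\ rho_lo <= rho x <= rho_hi, rho_lo <= rhoh x <= rho_hi,
           - w_hi <= w x <= w_hi & - w_hi <= wh x <= w_hi]) ->
    - int0l l (fun x => gam * (`|w x| * w x - `|wh x| * wh x) * a x
                        * (rho x * w x - rhoh x * wh x))
    <= C1 * Hrel l a g z P eps rho w rhoh wh
       - 2 * Drel l a gam rho w rhoh wh.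
Proof.
move=> lo0 lohi wb0 eb0 alo0 alohi gh0 zh0 glo0 glohi.
set c := eps_hi ^+ 2 * w_hi ^+ 2.
set k := c / rho_hi.
set K := gam_hi * 2 * w_hi ^+ 3 / rho_lo.
have hi0 : 0 < rho_hi by lra.
have c0 : 0 < c by rewrite /c; apply: mulr_gt0; apply: exprn_gt0.
have k0 : 0 < k by rewrite /k; apply: divr_gt0.
have K0 : 0 <= K.
  rewrite /K; apply: mulr_ge0; [|by rewrite invr_ge0; lra].
  by apply: mulr_ge0; [lra|apply: exprn_ge0; lra].
exists (K / k + 1); split.
  by apply: ltr_pwDr => //; apply: divr_ge0 => //; lra.
move=> l a g z P l0 sm cv hA ma ha mz hz eps gam rho w rhoh wh he hg mr mw mrh mwh hb.
have hP : forall s, 0 < s -> derivable P s 1 := sm 0%N.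
have hP1 : forall s, 0 < s -> derivable (derive1 P) s 1 := sm 1%N.
have PW : forall x, x \in `[0, l] ->
  - (gam * (`|w x| * w x - `|wh x| * wh x) * a x * (rho x * w x - rhoh x * wh x)) <=
  (K / k + 1) * (a x * (eps ^+ 2 * rho x * w x ^+ 2 / 2 + P (rho x) + g * z x * rho x)
     - a x * (eps ^+ 2 * rhoh x * wh x ^+ 2 / 2 + P (rhoh x) + g * z x * rhoh x)
     - a x * ((eps ^+ 2 * wh x ^+ 2 / 2 + derive1 P (rhoh x) + g * z x) * (rho x - rhoh x)
              + eps ^+ 2 * rhoh x * wh x * (w x - wh x)))
  - 2 * (16^-1 * (gam * a x * rhoh x * (`|w x| + `|wh x|) * (w x - wh x) ^+ 2)).
  move=> x hx; have [hr hrh hw hwh] := hb x hx.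
  have /andP[a1 a2] := ha x hx.
  have a0 : 0 <= a x by lra.
  have hB := @pw R P rho_lo rho_hi w_hi eps_hi eps (rho x) (rhoh x) (w x) (wh x)
     lo0 wb0 eb0 hP hP1 hA he hr hrh hw hwh.
  have /andP[g1 g2] := hg.
  have hF := @fric R (w x) (wh x) (rho x) (rhoh x) (a x) gam gam_hi rho_lo w_hi
     lo0 (proj1 (andP hrh)) a0 (ltac:(apply/andP; split; lra)) hw hwh.
  set B := P (rho x) - P (rhoh x) - _ + _ + _ in hB.
  have E : a x * (eps ^+ 2 * rho x * w x ^+ 2 / 2 + P (rho x) + g * z x * rho x)
     - a x * (eps ^+ 2 * rhoh x * wh x ^+ 2 / 2 + P (rhoh x) + g * z x * rhoh x)
     - a x * ((eps ^+ 2 * wh x ^+ 2 / 2 + derive1 P (rhoh x) + g * z x) * (rho x - rhoh x)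
              + eps ^+ 2 * rhoh x * wh x * (w x - wh x)) = a x * B by rewrite /B; field.
  rewrite E.
  have E2 : 2 * (16^-1 * (gam * a x * rhoh x * (`|w x| + `|wh x|) * (w x - wh x) ^+ 2))
    = 8^-1 * (gam * a x * rhoh x * (`|w x| + `|wh x|) * (w x - wh x) ^+ 2) by field.
  rewrite E2.
  rewrite -/c -/k in hB. rewrite -/K in hF.
  set dr2 := (rho x - rhoh x) ^+ 2 in hB hF.
  have d0 : 0 <= dr2 by apply: sqr_ge0.
  have h1 : K * a x * dr2 <= (K / k + 1) * (a x * B).
    have e1 : K * a x * dr2 = (K / k + 1) * (a x * (k * dr2)) - a x * (k * dr2).
      by field; rewrite gt_eqF.
    rewrite e1.
    have : 0 <= a x * (k * dr2) by apply: mulr_ge0 => //; apply: mulr_ge0 => //; lra.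
    have : (K / k + 1) * (a x * (k * dr2)) <= (K / k + 1) * (a x * B).
      apply: ler_wpM2l; first by apply: addr_ge0 => //; apply: divr_ge0 => //; lra.
      by apply: ler_wpM2l.
    lra.
  lra.
have mD : measurable (`[0, l] : set R) by exact: measurable_itv.
have ga : good l a by apply: good_hyp ma ha.
have gr : good l rho by apply: (@good_hyp R l rho rho_lo rho_hi mr) => x /hb [].
have grh : good l rhoh by apply: (@good_hyp R l rhoh rho_lo rho_hi mrh) => x /hb [].
have gw : good l w by apply: (@good_hyp R l w (- w_hi) w_hi mw) => x /hb [].
have gwh : good l wh by apply: (@good_hyp R l wh (- w_hi) w_hi mwh) => x /hb [].
have gz : good l (fun x => g * z x).
  split.
    by apply: (@measurable_funM _ _ R _ (fun _ => g) z) => //; exact: measurable_cst.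
  by exists (g_hi * z_hi) => x /hz.
have gP : good l (fun x => P (rho x)).
  apply: (@good_comp R l P rho rho_lo rho_hi lohi mr) => [x /hb []//|s hs]; apply: hP; lra.
have gPh : good l (fun x => P (rhoh x)).
  apply: (@good_comp R l P rhoh rho_lo rho_hi lohi mrh) => [x /hb []//|s hs]; apply: hP; lra.
have gP1 : good l (fun x => derive1 P (rhoh x)).
  apply: (@good_comp R l (derive1 P) rhoh rho_lo rho_hi lohi mrh) => [x /hb []//|s hs]; apply: hP1; lra.
Ltac gsolve ga gr grh gw gwh gz gP gPh gP1 :=
  repeat first [exact: ga | exact: gr | exact: grh | exact: gw | exact: gwh | exact: gz
    | exact: gP | exact: gPh | exact: gP1 | apply: goodC | apply: goodX | apply: goodA
    | apply: goodD | apply: goodB | apply: goodM | apply: goodN].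
rewrite /Hrel /Henergy /Drel /int0l.
set L := (fun x => gam * (`|w x| * w x - `|wh x| * wh x) * a x * (rho x * w x - rhoh x * wh x)).
set I1 := (fun x => a x * (eps ^+ 2 * rho x * w x ^+ 2 / 2 + P (rho x) + g * z x * rho x)).
set I2 := (fun x => a x * (eps ^+ 2 * rhoh x * wh x ^+ 2 / 2 + P (rhoh x) + g * z x * rhoh x)).
set I3 := (fun x => a x * ((eps ^+ 2 * wh x ^+ 2 / 2 + derive1 P (rhoh x) + g * z x) * (rho x - rhoh x)
              + eps ^+ 2 * rhoh x * wh x * (w x - wh x))).
set Dn := (fun x => gam * a x * rhoh x * (`|w x| + `|wh x|) * (w x - wh x) ^+ 2).
have gL : good l L by rewrite /L; gsolve ga gr grh gw gwh gz gP gPh gP1.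
have gI1 : good l I1 by rewrite /I1; gsolve ga gr grh gw gwh gz gP gPh gP1.
have gI2 : good l I2 by rewrite /I2; gsolve ga gr grh gw gwh gz gP gPh gP1.
have gI3 : good l I3 by rewrite /I3; gsolve ga gr grh gw gwh gz gP gPh gP1.
have gDn : good l Dn by rewrite /Dn; gsolve ga gr grh gw gwh gz gP gPh gP1.
have gI12 : good l (fun x => I1 x - I2 x) by apply: goodB.
have gI123 : good l (fun x => I1 x - I2 x - I3 x) by apply: goodB.
have gH : good l (fun x => (K / k + 1) * (I1 x - I2 x - I3 x)) by apply: goodM => //; apply: goodC.
have gD2 : good l (fun x => 2 * (16^-1 * Dn x)) by apply: goodM; [apply: goodC|apply: goodM => //; apply: goodC].
have gD1 : good l (fun x => 16^-1 * Dn x) by apply: goodM => //; apply: goodC.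
have gNL : good l (fun x => -1 * L x) by apply: goodM => //; apply: goodC.
have gR : good l (fun x => (K / k + 1) * (I1 x - I2 x - I3 x) - 2 * (16^-1 * Dn x)) by apply: goodB.
have le : Rintegral (@lebesgue_measure R) `[0, l] (fun x => -1 * L x) <=
    Rintegral (@lebesgue_measure R) `[0, l]
      (fun x => (K / k + 1) * (I1 x - I2 x - I3 x) - 2 * (16^-1 * Dn x)).
  apply: le_Rintegral => //; try exact: good_int.
  by move=> x hx; rewrite mulN1r; apply: PW.
rewrite RintegralB // ?good_int // in le.
rewrite !RintegralZl // ?good_int // in le.
rewrite !RintegralB // ?good_int // in le.
by rewrite mulN1r in le.
Qed.
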